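(* Let $\Sigma$ be a finite nonempty set of $d\times d$ real matrices with nonnegative entries. There exists a constant $K>0$ such that the following holds. For each $i\in\{1,\dots,d\}$ let $m_i$ be any positive integer with $\|\Sigma^{m_i}\|_{i,i}\ne 0$, or $m_i=1$ if no such positive integer exists. Then \[ \max_{i}\sqrt[m_i]{\|\Sigma^{m_i}\|_{i,i}}\;\le\;\rho(\Sigma)\;\le\;\max_i\sqrt[m_i]{K\,\|\Sigma^{m_i}\|_{i,i}}. \]
   Context: For $n\ge1$, $\|\Sigma^n\|_{i,j}=\max_{A_1,\dots,A_n\in\Sigma}(A_1\cdots A_n)_{i,j}$. The joint spectral radius is $\rho(\Sigma)=\lim_{n\to\infty}\sqrt[n]{\max_{A_1,\dots,A_n\in\Sigma}\|A_1\cdots A_n\|}$ for any matrix norm (the limit exists and is independent of the norm). The constant $K$ depends only on $\Sigma$, not on the choice of the $m_i$. *)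

(* Defs.v *)
From HB Require Import structures.
From mathcomp Require Import all_boot all_order all_algebra.
From mathcomp Require Import all_classical all_reals all_analysis.
Set Implicit Arguments. Unset Strict Implicit. Unset Printing Implicit Defensive.
Import Order.TTheory GRing.Theory Num.Theory.
Local Open Scope ring_scope.

Definition mxprod (R : realType) (d : nat) (s : seq 'M[R]_d) : 'M[R]_d :=
  foldr (fun A B => A *m B) 1%:M s.

Definition word_prod (R : realType) (d : nat) (Sigma : seq 'M[R]_d) (n : nat)
  (t : {ffun 'I_n -> 'I_(size Sigma)}) : 'M[R]_d :=
  mxprod [seq Sigma`_(t l) | l <- enum 'I_n].

(* ||Sigma^n||_{i,j} = max over all products of n matrices of Sigma of the
   (i,j) entry.  (Entries are nonnegative in the theorem, so starting the
   max at 0 is harmless.) *)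
Definition sigma_entry (R : realType) (d : nat) (Sigma : seq 'M[R]_d) (n : nat)
  (i j : 'I_d) : R :=
  \big[Num.max/0]_(t : {ffun 'I_n -> 'I_(size Sigma)}) (@word_prod R d Sigma n t i j).

Definition mx_maxnorm (R : realType) (d : nat) (A : 'M[R]_d) : R :=
  \big[Num.max/0]_(i < d) \big[Num.max/0]_(j < d) `|A i j|.

Definition sigma_norm (R : realType) (d : nat) (Sigma : seq 'M[R]_d) (n : nat) : R :=
  \big[Num.max/0]_(t : {ffun 'I_n -> 'I_(size Sigma)}) mx_maxnorm (@word_prod R d Sigma n t).

Definition jsr (R : realType) (d : nat) (Sigma : seq 'M[R]_d) : R :=
  limn (fun n : nat => sigma_norm Sigma n.+1 `^ (n.+1%:R)^-1).

Definition nonneg_mx (R : realType) (d : nat) (A : 'M[R]_d) : Prop :=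
  forall i j, 0 <= A i j.

(* Main.v *)
Require Import Defs.
From HB Require Import structures.
From mathcomp Require Import all_boot all_order all_algebra.
From mathcomp Require Import all_classical all_reals all_analysis.
From mathcomp Require Import zify ring.
Import Order.TTheory GRing.Theory Num.Theory.
Local Open Scope ring_scope.
Set Implicit Arguments. Unset Strict Implicit. Unset Printing Implicit Defensive.

Section PowHelp.
Variable R : realType.

Lemma nat_neq0 n : (0 < n)%N -> n%:R != 0 :> R.
Proof. by rewrite pnatr_eq0 -lt0n. Qed.

Lemma pow_root (x : R) n : 0 <= x -> (0 < n)%N -> (x `^ (n%:R^-1)) ^+ n = x.
Proof.
move=> x0 n0; rewrite -powR_mulrn ?powR_ge0 // -powRrM mulVf ?nat_neq0 //.
exact: powRr1.
Qed.

Lemma root_pow (x : R) n : 0 <= x -> (0 < n)%N -> (x ^+ n) `^ (n%:R^-1) = x.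
Proof.
move=> x0 n0; rewrite -powR_mulrn // -powRrM mulfV ?nat_neq0 //.
exact: powRr1.
Qed.

Lemma root_mono (x y r : R) : 0 <= r -> 0 <= x -> x <= y -> x `^ r <= y `^ r.
Proof.
move=> r0 x0 xy; apply: (ge0_ler_powR r0) => //; rewrite nnegrE //.
exact: le_trans xy.
Qed.

Lemma root_le (x y : R) n k : 0 <= x -> 0 <= y -> (0 < n)%N -> (0 < k)%N ->
  x ^+ n <= y ^+ k -> x `^ (k%:R^-1) <= y `^ (n%:R^-1).
Proof.
move=> x0 y0 n0 k0 h.
have e1 : k%:R^-1 = n%:R * (n * k)%:R^-1 :> R.
  by rewrite natrM invfM mulrA mulfV ?nat_neq0 // mul1r.
have e2 : n%:R^-1 = k%:R * (n * k)%:R^-1 :> R.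
  by rewrite natrM invfM mulrCA mulfV ?nat_neq0 // mulr1.
rewrite e1 e2 !powRrM !powR_mulrn //.
by apply: root_mono => //; exact: exprn_ge0.
Qed.

Lemma min_pos (I : finType) (h : I -> R) :
  (forall x, 0 < h x) -> exists δ, 0 < δ /\ forall x, δ <= h x.
Proof.
move=> hp; exists (\big[Num.min/1]_x h x); split.
  by apply/bigmin_gtP; split => // x _; exact: hp.
by move=> x; exact: bigmin_le.
Qed.

End PowHelp.

Section Words.
Variables (R : realType) (d : nat) (Sigma : seq 'M[R]_d).
Hypothesis Sne : Sigma != [::].
Hypothesis Snn : forall A, A \in Sigma -> nonneg_mx A.

Definition isword n (M : 'M[R]_d) :=
  exists t : {ffun 'I_n -> 'I_(size Sigma)}, word_prod t = M.

Lemma word_prodS n (t : {ffun 'I_n.+1 -> 'I_(size Sigma)}) :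
  word_prod t = Sigma`_(t ord0) *m word_prod [ffun l => t (lift ord0 l)].
Proof.
rewrite /word_prod enum_ordSl /= /mxprod /=; congr (_ *m _).
rewrite -map_comp; congr foldr; apply: eq_map => l /=; by rewrite ffunE.
Qed.

Lemma size_Sigma_gt0 : (0 < size Sigma)%N.
Proof. by case: Sigma Sne. Qed.

Lemma isword0 : isword 0 1%:M.
Proof.
exists [ffun l : 'I_0 => Ordinal size_Sigma_gt0].
by rewrite /word_prod enum_ord0.
Qed.

Lemma iswordS n A M : A \in Sigma -> isword n M -> isword n.+1 (A *m M).
Proof.
move=> AS [t <-].
have hi : (index A Sigma < size Sigma)%N by rewrite index_mem.
exists [ffun l : 'I_n.+1 => if unlift ord0 l is Some l' then t l' else Ordinal hi].
rewrite word_prodS ffunE unlift_none /= nth_index //; congr (_ *m _).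
congr word_prod; apply/ffunP => l; rewrite !ffunE liftK //.
Qed.

Lemma iswordSinv n M : isword n.+1 M ->
  exists A X, [/\ A \in Sigma, isword n X & M = A *m X].
Proof.
move=> [t <-]; rewrite word_prodS.
exists Sigma`_(t ord0), (word_prod [ffun l => t (lift ord0 l)]); split => //.
  by rewrite mem_nth.
by eexists.
Qed.

Lemma isword_cat a b X Y : isword a X -> isword b Y -> isword (a + b) (X *m Y).
Proof.
elim: a X => [|a IH] X.
  by move=> [t <-] wY; rewrite /word_prod enum_ord0 /= /mxprod /= mul1mx.
move=> /iswordSinv [A [X' [AS wX' ->]]] wY; rewrite -mulmxA addSn.
by apply: iswordS => //; apply: IH.
Qed.

Lemma isword_split a b M : isword (a + b) M ->
  exists X Y, [/\ isword a X, isword b Y & M = X *m Y].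
Proof.
elim: a M => [|a IH] M.
  by move=> wM; exists 1%:M, M; split => //; [exact: isword0 | rewrite mul1mx].
rewrite addSn => /iswordSinv [A [X' [AS /IH [X [Y [wX wY ->]]] ->]]].
by exists (A *m X), Y; split => //; [exact: iswordS | rewrite mulmxA].
Qed.

Lemma isword_nn n M : isword n M -> forall i j, 0 <= M i j.
Proof.
elim: n M => [|n IH] M.
  move=> [t <-]; rewrite /word_prod enum_ord0 /= /mxprod /= => i j.
  by rewrite mxE; case: (i == j).
move=> /iswordSinv [A [X [AS wX ->]]] i j; rewrite mxE.
by apply: sumr_ge0 => k _; apply: mulr_ge0; [exact: Snn | exact: IH].
Qed.

Local Notation E := (sigma_entry Sigma).

Lemma le_E n M i j : isword n M -> M i j <= E n i j.
Proof. by move=> [t <-]; rewrite /sigma_entry; exact: (le_bigmax _ (fun t => word_prod t i j)). Qed.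

Lemma E_attained n i j : exists M, isword n M /\ E n i j = M i j.
Proof.
have hi : (0 < size Sigma)%N := size_Sigma_gt0.
rewrite /sigma_entry.
have [t _ ->] := @eq_bigmax _ _ _ (0:R) [ffun=> Ordinal hi] xpredT
   (fun t => word_prod t i j) isT (fun t _ => @isword_nn n _ (ex_intro _ t erefl) i j).
by exists (word_prod t); split => //; exists t.
Qed.

Lemma E_ge0 n i j : 0 <= E n i j.
Proof. by have [M [wM ->]] := E_attained n i j; exact: isword_nn wM i j. Qed.

End Words.

Section Ent.
Variables (R : realType) (d : nat) (Sigma : seq 'M[R]_d).
Hypothesis Sne : Sigma != [::].
Hypothesis Snn : forall A, A \in Sigma -> nonneg_mx A.
Local Notation E := (sigma_entry Sigma).
Local Notation isword := (isword Sigma).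

Lemma isword0_eq M : isword 0 M -> M = 1%:M.
Proof. by move=> [t <-]; rewrite /word_prod enum_ord0. Qed.

Lemma E0 i j : E 0 i j = (i == j)%:R.
Proof.
have [M [/isword0_eq -> ->]] := E_attained Sne Snn 0 i j.
by rewrite mxE.
Qed.

Lemma E_cat a b j k l : E a j k * E b k l <= E (a + b) j l.
Proof.
have [X [wX ->]] := E_attained Sne Snn a j k.
have [Y [wY ->]] := E_attained Sne Snn b k l.
apply: le_trans (le_E j l (isword_cat wX wY)).
rewrite mxE (bigD1 k) //= lerDl.
apply: sumr_ge0 => kk _; apply: mulr_ge0; [exact: (isword_nn Snn wX _ _) | exact: (isword_nn Snn wY _ _)].
Qed.

Lemma E_split a b j l : E (a + b) j l <= \sum_k E a j k * E b k l.
Proof.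
have [M [wM ->]] := E_attained Sne Snn (a + b) j l.
have [X [Y [wX wY ->]]] := isword_split Sne wM.
rewrite mxE; apply: ler_sum => k _; apply: ler_pM.
- exact: (isword_nn Snn wX _ _).
- exact: (isword_nn Snn wY _ _).
- exact: le_E.
- exact: le_E.
Qed.

Lemma E_pow k n i : E k i i ^+ n <= E (k * n) i i.
Proof.
elim: n => [|n IH]; first by rewrite expr0 muln0 E0 eqxx.
rewrite exprS mulnS; apply: le_trans (E_cat _ _ _ i _).
apply: ler_wpM2l => //. exact: (E_ge0 Sne Snn k i i).
Qed.

Definition Bd := 1 + \sum_(A <- Sigma) \sum_i \sum_j A i j.

Lemma Bd_ge1 : 1 <= Bd.
Proof.
rewrite /Bd lerDl big_seq; apply: sumr_ge0 => A AS.
by apply: sumr_ge0 => i _; apply: sumr_ge0 => j _; apply: (Snn AS).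
Qed.

Lemma row_le_Bd A i : A \in Sigma -> \sum_j A i j <= Bd.
Proof.
move=> AS; rewrite /Bd (big_rem A AS) /= addrCA.
apply: (@le_trans _ _ (\sum_i0 \sum_j A i0 j)).
  rewrite [leRHS](bigD1 i) //= lerDl; apply: sumr_ge0 => i' _; apply: sumr_ge0 => j _.
  exact: (Snn AS).
rewrite lerDl; apply: addr_ge0 => //; rewrite big_seq; apply: sumr_ge0 => A' A'S.
by apply: sumr_ge0 => i' _; apply: sumr_ge0 => j _; apply: (Snn (mem_rem A'S)).
Qed.

Lemma word_le_Bd n M : isword n M -> forall j l, M j l <= Bd ^+ n.
Proof.
elim: n M => [|n IH] M.
  move=> /isword0_eq -> j l; rewrite expr0 mxE; by case: (j == l).
move=> /iswordSinv [A [X [AS wX ->]]] j l; rewrite mxE exprS.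
apply: (@le_trans _ _ (\sum_k A j k * Bd ^+ n)).
  by apply: ler_sum => k _; apply: ler_wpM2l; [exact: (Snn AS) | exact: IH].
by rewrite -mulr_suml; apply: ler_wpM2r; [apply: exprn_ge0; apply: le_trans Bd_ge1 | exact: row_le_Bd].
Qed.

Lemma E_le_Bd n j l : E n j l <= Bd ^+ n.
Proof. by have [M [wM ->]] := E_attained Sne Snn n j l; exact: word_le_Bd wM j l. Qed.

End Ent.

Section Rho.
Variables (R : realType) (d : nat) (Sigma : seq 'M[R]_d).
Hypothesis Sne : Sigma != [::].
Hypothesis Snn : forall A, A \in Sigma -> nonneg_mx A.
Local Notation E := (sigma_entry Sigma).

Let Ege0 n i j : 0 <= E n i j := E_ge0 Sne Snn n i j.

Definition Sset i := [set (E n i i) `^ (n%:R^-1) | n in [set n : nat | (0 < n)%N]]%classic.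
Definition sr i := sup (Sset i).

Lemma Sset_ne i : (Sset i !=set0)%classic.
Proof. by exists ((E 1 i i) `^ (1%:R^-1)), 1%N. Qed.

Lemma Sset_ub i : has_ubound (Sset i).
Proof.
exists (Bd Sigma) => _ [n /= n0 <-].
have B0 : 0 <= Bd Sigma by apply: le_trans (Bd_ge1 Snn).
rewrite -(@root_pow _ (Bd Sigma) n) //; apply: root_mono => //.
exact: (E_le_Bd Sne Snn).
Qed.

Lemma u_le_sr i n : (0 < n)%N -> E n i i `^ (n%:R^-1) <= sr i.
Proof. by move=> n0; apply: (ub_le_sup (Sset_ub i)); exists n. Qed.

Lemma sr_ge0 i : 0 <= sr i.
Proof. by apply: le_trans (u_le_sr i (isT : (0 < 1)%N)); exact: powR_ge0. Qed.

Lemma u_le_pow i n : E n i i <= sr i ^+ n.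
Proof.
case: n => [|n]; first by rewrite E0 // eqxx expr0.
rewrite -(@pow_root _ (E n.+1 i i) n.+1) //.
by apply: lerXn2r; rewrite ?nnegrE ?powR_ge0 ?sr_ge0 //; exact: u_le_sr.
Qed.

Variable i : 'I_d.
Definition inC k := `[< exists a b, 0 < E a i k /\ 0 < E b k i >].

Lemma inC_i : inC i.
Proof. by apply/asboolP; exists 0%N, 0%N; rewrite E0 // eqxx ltr01. Qed.

Lemma inC_mid a b j k l : inC j -> inC l -> 0 < E a j k * E b k l -> inC k.
Proof.
move=> /asboolP [a1 [b1 [h1 h1']]] /asboolP [a2 [b2 [h2 h2']]] h.
have hjk : 0 < E a j k.
  by rewrite lt_def; apply/andP; split => //; apply/eqP => e; move: h; rewrite e mul0r ltxx.
have hkl : 0 < E b k l.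
  by rewrite lt_def; apply/andP; split => //; apply/eqP => e; move: h; rewrite e mulr0 ltxx.
apply/asboolP; exists (a1 + a)%N, (b + b2)%N; split.
  by apply: lt_le_trans (E_cat Sne Snn _ _ _ j _); exact: mulr_gt0.
by apply: lt_le_trans (E_cat Sne Snn _ _ _ l _); exact: mulr_gt0.
Qed.

Definition Nc n := \big[Num.max/0]_(p : 'I_d * 'I_d | inC p.1 && inC p.2) E n p.1 p.2.

Lemma Nc_ge0 n : 0 <= Nc n.
Proof. exact: bigmax_ge_id. Qed.

Lemma E_le_Nc n j l : inC j -> inC l -> E n j l <= Nc n.
Proof.
move=> hj hl; rewrite /Nc.
have := @le_bigmax_cond _ _ _ 0 (j, l) (fun p : 'I_d * 'I_d => inC p.1 && inC p.2) (fun p => E n p.1 p.2).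
by apply; rewrite /= hj hl.
Qed.

Lemma d_gt0 : (0 < d)%N.
Proof. by case: i => m /= h; exact: leq_ltn_trans (leq0n m) h. Qed.

Lemma Nc_sub a b : Nc (a + b) <= d%:R * (Nc a * Nc b).
Proof.
apply: bigmax_le => [|[j l] /andP [hj hl]] /=.
  by apply: mulr_ge0; [exact: ler0n | apply: mulr_ge0; exact: Nc_ge0].
apply: le_trans (E_split Sne Snn a b j l) _.
apply: (@le_trans _ _ (\sum_(k < d) (Nc a * Nc b))); last first.
  by rewrite sumr_const card_ord mulr_natl.
apply: ler_sum => k _.
case: (boolP (0 < E a j k * E b k l)) => hp.
  have hk := inC_mid hj hl hp.
  by apply: ler_pM; [exact: Ege0 | exact: Ege0 | exact: E_le_Nc | exact: E_le_Nc].
apply: (@le_trans _ _ 0); first by rewrite leNgt.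
by apply: mulr_ge0; exact: Nc_ge0.
Qed.

Lemma Nc_pow n k : d%:R * Nc (n * k.+1) <= (d%:R * Nc n) ^+ k.+1.
Proof.
elim: k => [|k IH]; first by rewrite muln1 expr1.
rewrite mulnS exprS.
apply: (@le_trans _ _ (d%:R * (d%:R * (Nc n * Nc (n * k.+1))))).
  by apply: ler_wpM2l; [exact: ler0n | exact: Nc_sub].
have -> : d%:R * (d%:R * (Nc n * Nc (n * k.+1))) =
  (d%:R * Nc n) * (d%:R * Nc (n * k.+1)) :> R.
  by rewrite mulrACA mulrA.
apply: ler_wpM2l; last exact: IH.
by apply: mulr_ge0; [exact: ler0n | exact: Nc_ge0].
Qed.

Lemma sr_pow_le n : (0 < n)%N -> sr i ^+ n <= d%:R * Nc n.
Proof.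
move=> n0.
have Y0 : 0 <= d%:R * Nc n by apply: mulr_ge0; [exact: ler0n | exact: Nc_ge0].
have h : sr i <= (d%:R * Nc n) `^ (n%:R^-1).
  apply: ge_sup (Sset_ne i) _ => _ [k /= k0 <-].
  apply: root_le => //.
  apply: le_trans (E_pow Sne Snn k n i) _.
  apply: (@le_trans _ _ (Nc (k * n))); first exact: E_le_Nc inC_i inC_i.
  apply: (@le_trans _ _ (d%:R * Nc (k * n))).
    by rewrite ler_peMl ?Nc_ge0 // ler1n d_gt0.
  by case: k k0 => // k _; rewrite mulnC; exact: Nc_pow.
rewrite -(pow_root Y0 n0); apply: lerXn2r => //; rewrite nnegrE ?powR_ge0 //.
exact: sr_ge0.
Qed.

Lemma sr_pow_le' n : sr i ^+ n <= d%:R * Nc n.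
Proof.
case: n => [|n]; last exact: sr_pow_le.
rewrite expr0; apply: (@le_trans _ _ (Nc 0)).
  by apply: le_trans (E_le_Nc 0 inC_i inC_i); rewrite E0 // eqxx.
by rewrite ler_peMl ?Nc_ge0 // ler1n d_gt0.
Qed.

Lemma core_a : exists T δ, 0 < δ /\ forall n, exists x,
  (n <= x <= n + T)%N /\ δ * sr i ^+ n <= E x i i.
Proof.
have hc : forall k, exists ab : nat * nat, inC k -> 0 < E ab.1 i k /\ 0 < E ab.2 k i.
  move=> k; case: (boolP (inC k)) => hk.
    by move/asboolP: hk => [a [b h]]; exists (a, b).
  by exists (0, 0)%N.
have [f hf] := choice hc.
pose T := (\max_(k < d) (f k).1 + \max_(k < d) (f k).2)%N.
pose h (p : 'I_d * 'I_d) := if inC p.1 && inC p.2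
  then E (f p.1).1 i p.1 * E (f p.2).2 p.2 i else 1.
have hpos : forall p, 0 < h p.
  move=> [j l]; rewrite /h /=; case: ifP => [/andP [hj hl]|_]; last exact: ltr01.
  by apply: mulr_gt0; [case: (hf j hj) | case: (hf l hl)].
have [δ0 [δ0pos hδ0]] := min_pos hpos.
have dpos : 0 < d%:R :> R by rewrite ltr0n d_gt0.
exists T, (δ0 / d%:R); split; first exact: divr_gt0.
move=> n.
have [[j l] /andP [hj hl] hN] := @eq_bigmax _ _ _ 0 (i, i)
  (fun p : 'I_d * 'I_d => inC p.1 && inC p.2) (fun p => E n p.1 p.2)
  (introT andP (conj inC_i inC_i)) (fun p _ => Ege0 _ _ _).
exists ((f j).1 + n + (f l).2)%N; split.
  have h1 : ((f j).1 <= \max_(k < d) (f k).1)%N by exact: (leq_bigmax_cond j).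
  have h2 : ((f l).2 <= \max_(k < d) (f k).2)%N by exact: (leq_bigmax_cond l).
  rewrite /T; lia.
apply: (@le_trans _ _ (δ0 * Nc n)).
  rewrite -mulrA ler_wpM2l ?(ltW δ0pos) // ler_pdivrMl // .
  exact: sr_pow_le'.
rewrite /Nc hN /=.
apply: (@le_trans _ _ (h (j, l) * E n j l)).
  by apply: ler_wpM2r; [exact: Ege0 | exact: hδ0].
rewrite /h /= hj hl /= -addnA.
apply: le_trans (E_cat Sne Snn _ _ i j i).
rewrite -mulrA; apply: ler_wpM2l; first exact: Ege0.
by rewrite mulrC; exact: E_cat.
Qed.

End Rho.

Section Semi.
Variable R : realType.

Lemma fin_nat_pos (g : nat -> R) B :
  exists c, 0 < c /\ forall r, (r < B)%N -> 0 < g r -> c <= g r.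
Proof.
pose h (r : 'I_B) := if 0 < g r then g r else 1.
have hp : forall r, 0 < h r by move=> r; rewrite /h; case: ifP => // _; exact: ltr01.
have [c [c0 hc]] := min_pos hp.
exists c; split => // r rB gr; have := hc (Ordinal rB); by rewrite /h /= gr.
Qed.

Variables (u : nat -> R) (L δ : R) (T : nat).
Hypotheses (L0 : 0 < L) (δ0 : 0 < δ) (u_ge0 : forall n, 0 <= u n) (u0 : u 0%N = 1)
  (u_sup : forall a b, u a * u b <= u (a + b)%N)
  (u_big : forall n, exists x, (n <= x <= n + T)%N /\ δ * L ^+ n <= u x).

Lemma pos_add a b : 0 < u a -> 0 < u b -> 0 < u (a + b)%N.
Proof. by move=> ha hb; apply: lt_le_trans (u_sup a b); exact: mulr_gt0. Qed.

Lemma pos_mul a k : 0 < u a -> 0 < u (a * k)%N.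
Proof.
move=> ha; elim: k => [|k IH]; first by rewrite muln0 u0 ltr01.
by rewrite mulnS; exact: pos_add.
Qed.

Lemma core_b : exists c, 0 < c /\ forall m, 0 < u m -> c * L ^+ m <= u m.
Proof.
have [q [/andP [q1 _] hq]] := u_big 1.
have q0 : (0 < q)%N by [].
have uq : 0 < u q by apply: lt_le_trans hq; rewrite expr1; exact: mulr_gt0.
have hc : forall rho : 'I_q, exists y, (exists z, 0 < u z /\ (z %% q)%N = rho) ->
    0 < u y /\ (y %% q)%N = rho.
  move=> rho; case: (pselect (exists z, 0 < u z /\ (z %% q)%N = rho)).
    by move=> [z hz]; exists z.
  by move=> hn; exists 0%N.
have [g hg] := choice hc.
pose R0 := (\max_(rho < q) g rho)%N.
have [δ2 [δ2pos hδ2]] := fin_nat_pos u (R0 + T).+1.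
have [δ3 [δ3pos hδ3]] := fin_nat_pos (fun r => u r / L ^+ r) (R0 + T).
have LRpos : 0 < L ^+ (R0 + T) by exact: exprn_gt0.
exists (Num.min (δ * δ2 / L ^+ (R0 + T)) δ3); split.
  by rewrite lt_min; apply/andP; split => //; apply: divr_gt0 => //; exact: mulr_gt0.
move=> m um.
case: (ltnP m (R0 + T)) => hm.
  have := hδ3 m hm; rewrite divr_gt0 ?exprn_gt0 // => /(_ isT) h.
  apply: (@le_trans _ _ (δ3 * L ^+ m)).
    by apply: ler_wpM2r; [apply: exprn_ge0; exact: ltW | rewrite ge_min lexx orbT].
  by rewrite -ler_pdivlMr ?exprn_gt0.
have [x [/andP [nx xn] hx]] := u_big (m - (R0 + T))%N.
set n := (m - (R0 + T))%N in nx xn hx.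
have en : n = (m - (R0 + T))%N by [].
clearbody n.
have ux : 0 < u x by apply: lt_le_trans hx; apply: mulr_gt0 => //; exact: exprn_gt0.
pose y := (m + x * q.-1)%N.
have uy : 0 < u y by apply: pos_add => //; exact: pos_mul.
have rho_lt : (y %% q < q)%N by rewrite ltn_pmod.
have [ug gmod] := hg (Ordinal rho_lt) (ex_intro _ y (conj uy erefl)).
have gR0 : (g (Ordinal rho_lt) <= R0)%N by exact: (leq_bigmax_cond (Ordinal rho_lt)).
set gr := g (Ordinal rho_lt) in ug gmod gR0.
have xm : (x <= m)%N by clear -xn hm en; lia.
have ey : y = ((m - x) + x * q)%N.
  have h : (x * q = x * q.-1 + x)%N by rewrite -mulnSr prednK.
  by rewrite /y h addnCA subnK // addnC.
have rmod : ((m - x) = gr %[mod q])%N.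
  by rewrite gmod /= ey addnC modnMDl.
have grle : (gr <= m - x)%N by clear -gR0 xn hm en; lia.
have : (q %| (m - x) - gr)%N by rewrite -eqn_mod_dvd // rmod.
move=> /dvdnP [k hk].
have ur : 0 < u (m - x)%N.
  have -> : (m - x = gr + q * k)%N by rewrite mulnC -hk; clear -grle; lia.
  by apply: pos_add => //; exact: pos_mul.
have ur2 : δ2 <= u (m - x)%N by apply: hδ2 => //; clear -nx hm en; lia.
have -> : m = (x + (m - x))%N by clear -xm; lia.
apply: le_trans (u_sup _ _).
apply: (@le_trans _ _ (δ * L ^+ n * δ2)); last first.
  by apply: ler_pM => //; [apply: mulr_ge0; [exact: ltW | apply: exprn_ge0; exact: ltW] | exact: ltW].
have -> : (x + (m - x) = n + (R0 + T))%N by clear -xm hm en; lia.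
rewrite [L ^+ (n + _)]exprD.
apply: (@le_trans _ _ (δ * δ2 / L ^+ (R0 + T) * (L ^+ n * L ^+ (R0 + T)))).
  apply: ler_wpM2r; first by apply: mulr_ge0; apply: exprn_ge0; exact: ltW.
  by rewrite ge_min lexx.
have LR0 : L ^+ (R0 + T) != 0 by rewrite gt_eqF.
have -> : δ * δ2 / L ^+ (R0 + T) * (L ^+ n * L ^+ (R0 + T)) = δ * L ^+ n * δ2.
  by field.
by [].
Qed.

End Semi.

Section Decomp.
Variables (R : realType) (d : nat).

Definition ev (l : 'I_d) : 'cV[R]_d := delta_mx l 0.

Lemma col_entry (X : 'M[R]_d) (l a : 'I_d) : (X *m ev l) a 0 = X a l.
Proof. by rewrite /ev -colE mxE. Qed.

Lemma mxprod_cons (B : 'M[R]_d) bs : mxprod (B :: bs) = B *m mxprod bs.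
Proof. by []. Qed.

Lemma decomp (l : 'I_d) (P : 'M[R]_d) (bs : seq 'M[R]_d) :
  (forall c : 'cV[R]_d, c = (c l 0) *: ev l + P *m c) ->
  P *m P = P -> P *m ev l = 0 ->
  P *m (mxprod bs *m ev l) =
  \sum_(b < size bs) ((mxprod (drop b.+1 bs)) l l) *:
     (mxprod (map (fun B => P *m B *m P) (take b bs)) *m (P *m bs`_b *m ev l)).
Proof.
move=> hc hPP hPe; elim: bs => [|B bs IH].
  by rewrite big_ord0 /mxprod /= mul1mx hPe.
rewrite /= big_ord_recl /= drop0 mul1mx -mulmxA.
set c := mxprod bs *m ev l.
rewrite [in LHS](hc c) !mulmxDr col_entry !scalemxAr mulmxA; congr (_ + _).
have -> : P *m (B *m (P *m c)) = (P *m B *m P) *m (P *m c) by rewrite -!mulmxA [P *m (P *m c)]mulmxA hPP.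
rewrite IH mulmx_sumr; apply: eq_bigr => b _ /=.
by rewrite /bump /= add0n add1n -scalemxAr !mulmxA.
Qed.

End Decomp.

Section Skel.
Variables (R : realType) (d : nat) (Sigma : seq 'M[R]_d).
Hypothesis Sne : Sigma != [::].
Hypothesis Snn : forall A, A \in Sigma -> nonneg_mx A.
Local Notation E := (sigma_entry Sigma).
Local Notation ev := (@ev R d).

Definition wl (ws : seq 'M[R]_d) := all (fun A => A \in Sigma) ws.
Definition rs (V : {set 'I_d}) (A : 'M[R]_d) : 'M[R]_d :=
  \matrix_(j, k) (if (j \in V) && (k \in V) then A j k else 0).
Definition Q V ws := mxprod (map (rs V) ws).
Definition Pl (l : 'I_d) : 'M[R]_d := diag_mx (\row_a ((a != l)%:R)).

Lemma wl_word ws : wl ws -> isword Sigma (size ws) (mxprod ws).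
Proof.
elim: ws => [|A ws IH]; first by move=> _; exact: isword0 Sne.
by move=> /andP [AS h]; rewrite mxprod_cons; apply: iswordS => //; exact: IH.
Qed.

Lemma word_wl n M : isword Sigma n M -> exists ws, [/\ wl ws, size ws = n & M = mxprod ws].
Proof.
elim: n M => [|n IH] M.
  by move=> /isword0_eq ->; exists [::].
move=> /iswordSinv [A [X [AS /IH [ws [h1 h2 h3]] ->]]].
by exists (A :: ws); rewrite /= AS h1 h2 h3.
Qed.

Lemma wl_take b ws : wl ws -> wl (take b ws).
Proof. by move=> /allP h; apply/allP => x /mem_take; exact: h. Qed.

Lemma wl_drop b ws : wl ws -> wl (drop b ws).
Proof. by move=> /allP h; apply/allP => x /mem_drop; exact: h. Qed.

Lemma prod_ge0 ws j k : wl ws -> 0 <= mxprod ws j k.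
Proof. by move=> h; exact: (isword_nn Snn (wl_word h) j k). Qed.

Lemma prod_le_E ws j k : wl ws -> mxprod ws j k <= E (size ws) j k.
Proof. by move=> h; exact: (le_E j k (wl_word h)). Qed.

Lemma Q_bounds V ws : wl ws -> forall j k, 0 <= Q V ws j k /\ Q V ws j k <= mxprod ws j k.
Proof.
elim: ws => [|A ws IH].
  by move=> _ j k; rewrite /Q /mxprod /= mxE; case: (j == k) => /=; rewrite lexx.
move=> /andP [AS h] j k; rewrite /Q /= -/(Q V ws) !mxE.
split.
  apply: sumr_ge0 => k' _; apply: mulr_ge0; last by case: (IH h k' k).
  by rewrite mxE; case: ifP => _ //; exact: (Snn AS).
apply: ler_sum => k' _; apply: ler_pM.
- by rewrite mxE; case: ifP => _ //; exact: (Snn AS).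
- by case: (IH h k' k).
- by rewrite mxE; case: ifP => _ //; exact: (Snn AS).
- by case: (IH h k' k).
Qed.

Lemma Pl_mul m l (X : 'M[R]_(d, m)) a b : (Pl l *m X) a b = (a != l)%:R * X a b.
Proof. by rewrite /Pl mul_diag_mx !mxE. Qed.

Lemma Pl_c l (c : 'cV[R]_d) : c = (c l 0) *: ev l + Pl l *m c.
Proof.
apply/matrixP => a b; have h := Pl_mul l c a b; rewrite mxE in h.
rewrite !mxE h (ord1 b) eqxx andbT.
case: (eqVneq a l) => [->|al] /=; first by rewrite mulr1 mul0r addr0.
by rewrite mulr0 mul1r add0r.
Qed.

Lemma Pl_PP l : Pl l *m Pl l = Pl l.
Proof.
apply/matrixP => a b; rewrite Pl_mul /Pl !mxE.
by case: (a != l); rewrite ?mul1r ?mul0r // mul0rn.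
Qed.

Lemma Pl_e l : Pl l *m ev l = 0.
Proof.
apply/matrixP => a b; rewrite Pl_mul /ev !mxE.
by case: (eqVneq a l) => [_|al]; rewrite ?mul0r // mulr0.
Qed.

Lemma PrsP l V A : Pl l *m rs V A *m Pl l = rs (V :\ l) A.
Proof.
apply/matrixP => a b; rewrite /Pl mul_mx_diag mxE -/(Pl l) Pl_mul !mxE !in_setD1.
case: (eqVneq a l) => [_|al]; first by rewrite !mul0r.
case: (eqVneq b l) => [_|bl]; first by rewrite mulr0 andbF.
by rewrite mul1r mulr1.
Qed.

Variables (Lb t : R).
Hypotheses (Lb0 : 0 <= Lb) (hdiag : forall n j, E n j j <= Lb ^+ n) (tL : Lb < t).

Let t0 : 0 < t. Proof. exact: le_lt_trans tL. Qed.
Let tLpos : 0 < t - Lb. Proof. by rewrite subr_gt0. Qed.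

Fixpoint Ck k := if k is k'.+1 then 1 + d%:R * Ck k' * Bd Sigma / (t - Lb) else 1.

Lemma Ck_ge1 k : 1 <= Ck k.
Proof.
case: k => [|k] //=; rewrite lerDl; apply: divr_ge0; last exact: ltW.
apply: mulr_ge0; last by apply: le_trans (Bd_ge1 Snn).
apply: mulr_ge0 => //; elim: k => [|k IH] //=.
apply: addr_ge0 => //; apply: divr_ge0; last exact: ltW.
by apply: mulr_ge0; [apply: mulr_ge0 | apply: le_trans (Bd_ge1 Snn)].
Qed.

Lemma Q_row_notin (V : {set 'I_d}) A ws (j k : 'I_d) : j \notin V -> Q V (A :: ws) j k = 0.
Proof.
move=> jV; rewrite /Q /= mxE; apply: big1 => k' _.
by rewrite mxE (negbTE jV) /= mul0r.
Qed.

Lemma sum_geo n : \sum_(i < n) Lb ^+ (n.-1 - i) * t ^+ i <= t ^+ n / (t - Lb).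
Proof.
have h := subrXX Lb t n.
have e : \sum_(i < n) Lb ^+ (n.-1 - i) * t ^+ i = (t ^+ n - Lb ^+ n) / (t - Lb).
  apply: (@mulIf _ (t - Lb)); first by rewrite gt_eqF.
  rewrite mulfVK ?gt_eqF // mulrC.
  by rewrite -[RHS]opprB h -mulNr opprB.
rewrite e ler_pM2r ?invr_gt0 // lerBlDr lerDl; apply: exprn_ge0.
done.
Qed.

Lemma skel k : forall V : {set 'I_d}, (#|V| <= k)%N -> forall ws, wl ws ->
  forall j l, Q V ws j l <= Ck k * t ^+ size ws.
Proof.
have tn0 n : 0 <= t ^+ n by apply: exprn_ge0; exact: ltW.
elim: k => [|k IH] V hV ws hws j l.
  have -> : V = finset.set0 by apply: cards0_eq; move: hV; rewrite leqn0 => /eqP.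
  case: ws hws => [|A ws] hws.
    by rewrite /Q /mxprod /= mxE expr0 mulr1; case: (j == l).
  by rewrite Q_row_notin ?inE // mul1r.
have Ck0 : 0 <= Ck k by apply: le_trans (Ck_ge1 k).
case: (eqVneq j l) => [<-|jl].
  apply: (@le_trans _ _ (t ^+ size ws)); last by rewrite ler_peMl ?Ck_ge1.
  apply: le_trans (proj2 (Q_bounds V hws j j)) _.
  apply: le_trans (prod_le_E j j hws) _.
  apply: le_trans (hdiag _ _) _.
  by apply: lerXn2r; rewrite ?nnegrE // ltW.
have key : Q V ws j l = (Pl l *m (Q V ws *m ev l)) j 0.
  by rewrite Pl_mul col_entry jl mul1r.
rewrite key /Q (@decomp _ _ l (Pl l) _ (Pl_c l) (Pl_PP l) (Pl_e l)) size_map summxE.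
set n := size ws.
set G := d%:R * Ck k * Bd Sigma.
have G0 : 0 <= G.
  by apply: mulr_ge0; [apply: mulr_ge0 | apply: le_trans (Bd_ge1 Snn)].
apply: (@le_trans _ _ (\sum_(b < n) G * (Lb ^+ (n.-1 - b) * t ^+ b))).
  apply: ler_sum => b _; rewrite mxE.
  have bn : (b < size ws)%N by [].
  rewrite -map_drop -/(Q V (drop b.+1 ws)) -map_take -map_comp.
  have -> : [seq ((fun B => Pl l *m B *m Pl l) \o rs V) i | i <- take b ws]
      = [seq rs (V :\ l) i | i <- take b ws].
    by apply: eq_map => A /=; exact: PrsP.
  rewrite -/(Q (V :\ l) (take b ws)) (nth_map 0) //.
  have AS : ws`_b \in Sigma by apply: (allP hws); exact: mem_nth.
  have [s0 s1] := Q_bounds V (wl_drop b.+1 hws) l l.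
  have sb : Q V (drop b.+1 ws) l l <= Lb ^+ (n.-1 - b).
    apply: le_trans s1 _; apply: le_trans (prod_le_E l l (wl_drop b.+1 hws)) _.
    have -> : (n.-1 - b = (size ws - b).-1)%N by rewrite /n -subnS -subn1 -subnDA add1n.
    by rewrite size_drop subnS; exact: hdiag.
  rewrite [leRHS]mulrCA; apply: ler_pM => //.
    rewrite mxE; apply: sumr_ge0 => k' _; apply: mulr_ge0.
      by case: (Q_bounds (V :\ l) (wl_take b hws) j k').
    by rewrite col_entry Pl_mul mxE; apply: mulr_ge0 => //; case: ifP => _ //; exact: (Snn AS).
  rewrite mxE.
  apply: (@le_trans _ _ (\sum_(k' < d) Ck k * t ^+ b * Bd Sigma)); last first.
    by rewrite sumr_const card_ord -mulr_natl /G le_eqVlt; apply/orP; left; apply/eqP; ring.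
  apply: ler_sum => k' _; rewrite col_entry Pl_mul mxE.
  case: (boolP (l \in V)) => lV; last first.
    rewrite andbF mulr0 mulr0; apply: mulr_ge0; last by apply: le_trans (Bd_ge1 Snn).
    by apply: mulr_ge0.
  apply: ler_pM.
  - by case: (Q_bounds (V :\ l) (wl_take b hws) j k').
  - by apply: mulr_ge0 => //; case: ifP => _ //; exact: (Snn AS).
  - have hb : (#|V :\ l| <= k)%N by move: hV; rewrite (cardsD1 l V) lV.
    have := IH (V :\ l) hb (take b ws) (wl_take b hws) j k'.
    by rewrite size_take bn.
  - apply: (@le_trans _ _ (ws`_b k' l)).
      case: (k' != l); rewrite ?mul1r ?mul0r; last by apply: (Snn AS).
      by case: ifP => _ //; exact: (Snn AS).
    apply: le_trans (row_le_Bd Snn k' AS).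
    by rewrite (bigD1 l) //= lerDl; apply: sumr_ge0 => i _; exact: (Snn AS).
rewrite -mulr_sumr.
apply: (@le_trans _ _ (G * (t ^+ n / (t - Lb)))).
  by apply: ler_wpM2l => //; exact: sum_geo.
by rewrite /= mulrDl mul1r mulrA -[_ / (t - Lb) * _]mulrAC -/G lerDr.
Qed.

Lemma E_le_Ck n j l : E n j l <= Ck d * t ^+ n.
Proof.
have [M [wM ->]] := E_attained Sne Snn n j l.
have [ws [h1 h2 ->]] := word_wl wM.
have e : Q [set: 'I_d] ws = mxprod ws.
  rewrite /Q; congr mxprod; rewrite -[RHS]map_id; apply: eq_map => A.
  by apply/matrixP => a b; rewrite mxE !inE.
rewrite -e -h2; apply: skel => //; by rewrite cardsT card_ord.
Qed.

End Skel.

Section CvgHelp.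
Import numFieldNormedType.Exports.
Local Open Scope classical_set_scope.
Lemma root_cvg1 (R : realType) (c : R) : 0 < c ->
  c `^ (n.+1%:R^-1) @[n --> \oo] --> (1 : R).
Proof.
move=> c0.
have -> : (fun n : nat => c `^ (n.+1%:R^-1)) = expR \o (fun n => harmonic n * ln c).
  by apply: funext => n /=; rewrite /powR gt_eqF.
apply: (@cvg_comp _ _ _ _ expR _ (nbhs (0:R))).
  rewrite -(mul0r (ln c)); apply: cvgMl; exact: cvg_harmonic.
rewrite -expR0; exact: continuous_expR.
Qed.

End CvgHelp.

Section Final.
Import numFieldNormedType.Exports.
Local Open Scope classical_set_scope.
Variables (R : realType) (d : nat) (Sigma : seq 'M[R]_d).
Hypothesis Sne : Sigma != [::].
Hypothesis Snn : forall A, A \in Sigma -> nonneg_mx A.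
Local Notation E := (sigma_entry Sigma).
Local Notation N := (sigma_norm Sigma).

Lemma E_le_N n j l : E n j l <= N n.
Proof.
have [M [[t <-] ->]] := E_attained Sne Snn n j l.
rewrite /sigma_norm; apply: le_trans (le_bigmax _ (fun t => mx_maxnorm (word_prod t)) t).
rewrite /mx_maxnorm; apply: (bigmax_sup j) => //; apply: (bigmax_sup l) => //.
exact: ler_norm.
Qed.

Lemma N_le n X : 0 <= X -> (forall j l, E n j l <= X) -> N n <= X.
Proof.
move=> X0 h; apply: bigmax_le => // t _; apply: bigmax_le => // j _.
apply: bigmax_le => // l _.
rewrite ger0_norm; last exact: (isword_nn Snn (ex_intro _ t erefl) j l).
apply: le_trans (h j l); exact: (le_E j l (ex_intro _ t erefl)).
Qed.

Lemma N_ge0 n : 0 <= N n.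
Proof. exact: bigmax_ge_id. Qed.

Definition Lr := \big[Num.max/0]_(i < d) sr Sigma i.

Lemma Lr_ge0 : 0 <= Lr.
Proof. exact: bigmax_ge_id. Qed.

Lemma sr_le_Lr i : sr Sigma i <= Lr.
Proof. exact: (le_bigmax _ (fun i => sr Sigma i)). Qed.

Lemma diag_Lr n j : E n j j <= Lr ^+ n.
Proof.
apply: le_trans (u_le_pow Sne Snn j n) _.
by apply: lerXn2r; rewrite ?nnegrE ?Lr_ge0 ?(sr_ge0 Sne Snn) //; exact: sr_le_Lr.
Qed.

Lemma Lr_attained : 0 < Lr -> exists i, sr Sigma i = Lr.
Proof.
case: (pickP (fun i : 'I_d => true)) => [i0 _|h].
  rewrite /Lr.
  have [i _ ->] := @eq_bigmax _ _ _ 0 i0 xpredT (fun i => sr Sigma i) isT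
    (fun i _ => sr_ge0 Sne Snn i).
  by move=> _; exists i.
by rewrite /Lr big_pred0 // ltxx.
Qed.

Lemma Nc_le_N i n : Nc Sigma i n <= N n.
Proof. by apply: bigmax_le => [|p _]; [exact: N_ge0 | exact: E_le_N]. Qed.

Lemma Lr_cases : Lr = 0 \/ 0 < Lr.
Proof. by case: (ltgtP Lr 0) => h; [move: Lr_ge0; rewrite leNgt h | right | left]. Qed.

Lemma lowerN n : (0 < n)%N -> Lr ^+ n <= d%:R * N n.
Proof.
move=> n0; case: Lr_cases => [->|Lpos].
  by rewrite expr0n gtn_eqF //; apply: mulr_ge0; [exact: ler0n | exact: N_ge0].
have [i <-] := Lr_attained Lpos.
apply: le_trans (sr_pow_le' Sne Snn i n) _.
by apply: ler_wpM2l; [exact: ler0n | exact: Nc_le_N].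
Qed.

Lemma upperN t : Lr < t -> forall n, N n <= Ck Sigma Lr t d * t ^+ n.
Proof.
move=> tL n; apply: N_le.
  apply: mulr_ge0; first by apply: le_trans (Ck_ge1 Snn tL d).
  by apply: exprn_ge0; apply: ltW; apply: le_lt_trans tL; exact: Lr_ge0.
move=> j l; exact: (E_le_Ck Sne Snn Lr_ge0 diag_Lr tL).
Qed.

Lemma conv : N n.+1 `^ (n.+1%:R^-1) @[n --> \oo] --> Lr.
Proof.
apply/cvgrPdist_lt => e e0.
have e20 : 0 < e / 2 by rewrite divr_gt0.
set t := Lr + e / 2.
have tL : Lr < t by rewrite /t ltrDl.
have t0 : 0 < t by apply: le_lt_trans tL; exact: Lr_ge0.
set C := Ck Sigma Lr t d.
have C0 : 0 < C by apply: lt_le_trans (Ck_ge1 Snn tL d); exact: ltr01.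
have hu : (fun n : nat => C `^ (n.+1%:R^-1) * t) @ \oo --> 1 * t.
  by apply: cvgMl; exact: root_cvg1.
rewrite mul1r in hu.
have Hup := cvgr_dist_lt _ _ hu _ e20.
have up n : N n.+1 `^ (n.+1%:R^-1) <= C `^ (n.+1%:R^-1) * t.
  rewrite -(@root_pow _ t n.+1) ?(ltW t0) // -powRM ?(ltW C0) ?exprn_ge0 ?(ltW t0) //.
  apply: root_mono; [by rewrite invr_ge0 ler0n | exact: N_ge0 | exact: upperN].
case: Lr_cases => [L0|Lpos].
  near=> n.
  have h1 : `|t - C `^ (n.+1%:R^-1) * t| < e / 2 by near: n; exact: Hup.
  rewrite L0 sub0r normrN ger0_norm ?powR_ge0 //.
  apply: le_lt_trans (up n) _.
  move: h1; rewrite ltr_distlC => /andP [_ h1].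
  by apply: lt_le_trans h1 _; rewrite /t L0 add0r -splitr.
have [i _] := Lr_attained Lpos.
have dpos : 0 < d%:R :> R by rewrite ltr0n; case: i => m /= h; exact: leq_ltn_trans (leq0n m) h.
have di0 : 0 < d%:R^-1 :> R by rewrite invr_gt0.
have hl : (fun n : nat => (d%:R^-1) `^ (n.+1%:R^-1) * Lr) @ \oo --> 1 * Lr.
  by apply: cvgMl; exact: root_cvg1.
rewrite mul1r in hl.
have Hlo := cvgr_dist_lt _ _ hl _ e0.
have lo n : (d%:R^-1) `^ (n.+1%:R^-1) * Lr <= N n.+1 `^ (n.+1%:R^-1).
  rewrite -(@root_pow _ Lr n.+1) ?Lr_ge0 // -powRM ?(ltW di0) ?exprn_ge0 ?Lr_ge0 //.
  apply: root_mono; [by rewrite invr_ge0 ler0n | by apply: mulr_ge0; [exact: ltW | apply: exprn_ge0; exact: Lr_ge0] |].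
  by rewrite ler_pdivrMl // ; exact: lowerN.
near=> n.
have h1 : `|t - C `^ (n.+1%:R^-1) * t| < e / 2 by near: n; exact: Hup.
have h2 : `|Lr - (d%:R^-1) `^ (n.+1%:R^-1) * Lr| < e by near: n; exact: Hlo.
move: h1 h2; rewrite !ltr_distlC => /andP [_ h1] /andP [h2 _].
apply/andP; split.
  by apply: lt_le_trans h2 (lo n).
apply: le_lt_trans (up n) _; apply: lt_le_trans h1 _.
by rewrite /t -addrA -splitr.
Unshelve. all: end_near.
Qed.

Lemma jsr_eq : jsr Sigma = Lr.
Proof. by rewrite /jsr; apply: cvg_lim => //; exact: conv. Qed.

End Final.

Theorem theorem2 (R : realType) (d : nat) (Sigma : seq 'M[R]_d) :
  Sigma != [::] ->
  (forall A, A \in Sigma -> nonneg_mx A) ->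
  exists K : R, 0 < K /\
    forall m : 'I_d -> nat,
      (forall i, (0 < m i)%N /\
         (sigma_entry Sigma (m i) i i != 0 \/
          ((forall n, (0 < n)%N -> sigma_entry Sigma n i i = 0) /\ m i = 1%N))) ->
      \big[Num.max/0]_(i < d) (sigma_entry Sigma (m i) i i `^ ((m i)%:R)^-1)
        <= jsr Sigma /\
      jsr Sigma <=
        \big[Num.max/0]_(i < d) ((K * sigma_entry Sigma (m i) i i) `^ ((m i)%:R)^-1).
Proof.
move=> Sne Snn.
have hjsr : jsr Sigma = Lr Sigma := jsr_eq Sne Snn.
have lowerb (m : 'I_d -> nat) : (forall i, (0 < m i)%N) ->
    \big[Num.max/0]_(i < d) (sigma_entry Sigma (m i) i i `^ ((m i)%:R)^-1) <= Lr Sigma.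
  move=> hm; apply: bigmax_le => [|i _]; first exact: Lr_ge0.
  apply: le_trans (u_le_sr Sne Snn i (hm i)) _; exact: sr_le_Lr.
case: (Lr_cases Sigma) => [L0|Lpos].
  exists 1; split => // m hm; rewrite hjsr; split.
    by apply: lowerb => i; case: (hm i).
  by rewrite L0; exact: bigmax_ge_id.
have [i0 hi0] := Lr_attained Sne Snn Lpos.
have [T [δ [δ0 hb]]] := core_a Sne Snn i0.
rewrite hi0 in hb.
have u0 : sigma_entry Sigma 0 i0 i0 = 1 by rewrite E0 // eqxx.
have [c [c0 hc]] := @core_b R (fun n => sigma_entry Sigma n i0 i0) (Lr Sigma) δ T
  Lpos δ0 u0 (fun a b => E_cat Sne Snn a b i0 i0 i0) hb.
exists c^-1; split; first by rewrite invr_gt0.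
move=> m hm; rewrite hjsr; split.
  by apply: lowerb => i; case: (hm i).
apply: (bigmax_sup i0) => //.
have [mi0 hor] := hm i0.
have upos : 0 < sigma_entry Sigma (m i0) i0 i0.
  case: hor => [hne | [hz _]].
    by rewrite lt_def hne E_ge0.
  have [x [/andP [x1 _] hx]] := hb 1%N.
  move: hx; rewrite hz // => hx.
  have : 0 < δ * Lr Sigma ^+ 1 by rewrite expr1; exact: mulr_gt0.
  by rewrite ltNge hx.
have h := hc (m i0) upos.
rewrite -(@root_pow _ (Lr Sigma) (m i0)) ?Lr_ge0 //.
apply: root_mono; [by rewrite invr_ge0 ler0n | by apply: exprn_ge0; exact: Lr_ge0 |].
by rewrite ler_pdivlMl.
Qed.
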